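(* Let $F$ be a non-archimedean local field. For every $b\in B(\Gamma)^{\flat}$ there is a tropical curve $(\Gamma_b,w_b)$ such that there is a measure-preserving isomorphism $\mathsf{trop}(\pi^{-1}(b))\simeq J(\Gamma_b,w_b)$.
   Context: $\Gamma$ is a finite graph with edge set $E(\Gamma)$; $B(\Gamma)=\mathsf{Spec}\,\mathcal{O}_F[[T_e : e\in E(\Gamma)]]$, $\Delta\subset B(\Gamma)$ is the union of the divisors $(T_e)$, and $B(\Gamma)^{\flat}=B(\Gamma)(\mathcal{O}_F)\cap(B(\Gamma)\setminus\Delta)(F)$. $\pi\colon\mathfrak{V}(\Gamma,\eta)\to B(\Gamma)$ is the hypertoric Hitchin family (Mumford-type quotient of a GIT quotient of $\mathbb{W}^{E(\Gamma)}$ by the lattice $H_1(\Gamma,\mathbb{Z})$); for $b\in B(\Gamma)^{\flat}$ the fibre is the abelian $F$-variety $\pi^{-1}(b)=H^1(\Gamma,\mathbb{G}_{m})/\sigma_b(H_1(\Gamma,\mathbb{Z}))$, where $\sigma_b(\gamma)$ is the class of $(b_e^{\langle\gamma,e\rangle})_{e\in E(\Gamma)}$. For an abelian variety $A=\mathbb{G}_{m}^r/Y$ with $Y$ a discrete group, $\mathsf{trop}(A)=\mathbb{R}^r/\log|Y|$, with the measure induced by Lebesgue measure on $\mathbb{R}^r$. A tropical curve is a pair $(\Gamma,w)$ with $w\colon E(\Gamma)\to\mathbb{Q}_{>0}$; its Jacobian $J(\Gamma,w)$ is the cokernel of $\tau_w\colon H_1(\Gamma,\mathbb{Z})\to H^1(\Gamma,\mathbb{Z})$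 (taken as the torus $H^1(\Gamma,\mathbb{R})/\tau_w(H_1(\Gamma,\mathbb{Z}))$), where $\tau_w(\gamma)=\sum_{e}w(e)\langle\gamma,[e]\rangle[e]$. *)

(* Defs.v *)
From HB Require Import structures.
From mathcomp Require Import all_boot all_order all_algebra.
From mathcomp Require Import reals.
Set Implicit Arguments. Unset Strict Implicit. Unset Printing Implicit Defensive.
Import Order.TTheory GRing.Theory Num.Theory.
Local Open Scope ring_scope.

(* A non-archimedean local field: a field F with a normalized discrete
   valuation [val] (values on nonzero elements; val 0 is irrelevant),
   complete, with finite residue field. *)
Record nonarch_local_field (F : fieldType) := NALF {
  val : F -> int;
  val_mul : forall x y : F, x != 0 -> y != 0 -> val (x * y) = val x + val y;
  val_ultra : forall x y : F, x != 0 -> y != 0 -> x + y != 0 ->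
    Num.min (val x) (val y) <= val (x + y);
  val_uniformizer : exists pi : F, pi != 0 /\ val pi = 1;
  (* residue field O_F / m_F is finite *)
  residue_finite : exists s : seq F, forall x : F, x != 0 -> 0 <= val x ->
    exists2 a, a \in s & (a = 0 \/ 0 <= val a) /\ (x = a \/ 1 <= val (x - a));
  val_complete : forall u : nat -> F,
    (forall k : int, exists N : nat, forall m n : nat, (N <= m)%N -> (N <= n)%N ->
        u m = u n \/ k <= val (u m - u n)) ->
    exists l : F, forall k : int, exists N : nat, forall n : nat, (N <= n)%N ->
        u n = l \/ k <= val (u n - l)
}.

(* log|x| for the normalized absolute value |x| = q^{-v(x)}, log taken to base q. *)
Definition logabs (R : realType) (F : fieldType) (LF : nonarch_local_field F)
  (x : F) : R := - ((val LF x)%:~R).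

(* B(Gamma)^flat: O_F-points of Spec O_F[[T_e]] (T_e |-> b_e in m_F) avoiding Delta. *)
Definition in_B_flat (F : fieldType) (LF : nonarch_local_field F) (E : finType)
  (b : E -> F) : Prop := forall e, b e != 0 /\ 1 <= val LF (b e).

(* Integral 1-cycles: elements of H_1(Gamma, Z) inside Z^E. *)
Definition is_cycle (V E : finType) (src tgt : E -> V) (c : E -> int) : Prop :=
  forall v : V, \sum_(e | tgt e == v) c e - \sum_(e | src e == v) c e = 0.

Definition is_H1_basis (V E : finType) (src tgt : E -> V) (g : nat)
  (gam : 'I_g -> E -> int) : Prop :=
  [/\ forall i, is_cycle src tgt (gam i),
      forall n : 'I_g -> int, (forall e, \sum_i n i * gam i e = 0) -> forall i, n i = 0
    & forall c, is_cycle src tgt c -> exists n : 'I_g -> int,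
        forall e, c e = \sum_i n i * gam i e].

Definition lattice (R : realType) (g : nat) (M : 'M[R]_g) (x : 'rV[R]_g) : Prop :=
  exists n : 'rV[int]_g, x = map_mx (fun z : int => z%:~R) n *m M.

(* Measure-preserving isomorphism of real tori R^g / lattice M ~ R^g' / lattice M':
   a linear isomorphism with |det| = 1 carrying one lattice onto the other. *)
Definition mp_iso (R : realType) (g g' : nat) (M : 'M[R]_g) (M' : 'M[R]_g') : Prop :=
  exists h : g = g', exists A : 'M[R]_g',
    `|\det A| = 1 /\
    forall x : 'rV[R]_g, lattice M x <-> lattice M' (castmx (erefl 1%N, h) x *m A).

(* trop(pi^{-1}(b)): with H^1(Gamma,G_m) = Hom(H_1,G_m) identified with G_m^g by
   evaluation on the basis gam, sigma_b(gam_i) has coordinates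
   y_ij = prod_e b_e^(<gam_i,e><gam_j,e>); the lattice is log|Y|. *)
Definition trop_fibre_mx (R : realType) (F : fieldType) (LF : nonarch_local_field F)
  (E : finType) (b : E -> F) (g : nat) (gam : 'I_g -> E -> int) : 'M[R]_g :=
  \matrix_(i, j) logabs R LF (\prod_e b e ^ (gam i e * gam j e)).

(* Jacobian J(Gamma,w) = H^1(Gamma,R)/tau_w(H_1(Gamma,Z)), with H^1(Gamma,R) =
   Hom(H_1,R) identified with R^g via the basis gam. *)
Definition jac_mx (R : realType) (E : finType) (w : E -> rat) (g : nat)
  (gam : 'I_g -> E -> int) : 'M[R]_g :=
  \matrix_(i, j) \sum_e ratr (w e) * ((gam i e * gam j e)%:~R).

(* Main.v *)
Require Import Defs.
From HB Require Import structures.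
From mathcomp Require Import all_boot all_order all_algebra.
From mathcomp Require Import reals.
Import Order.TTheory GRing.Theory Num.Theory.
Local Open Scope ring_scope.

Lemma basis_change (V E : finType) (src tgt : E -> V) g g'
  (gam : 'I_g -> E -> int) (gam' : 'I_g' -> E -> int) :
  is_H1_basis src tgt gam -> is_H1_basis src tgt gam' ->
  exists P : 'M[int]_(g', g), forall e,
    (\col_i gam' i e) = P *m (\col_k gam k e).
Proof.
case=> _ _ span; case=> cyc' _ _.
have: forall i, exists n : 'I_g -> int, forall e, gam' i e = \sum_k n k * gam k e.
  by move=> i; apply: span; apply: cyc'.
case/fin_all_exists => n Hn.
exists (\matrix_(i,k) n i k) => e; apply/matrixP => i j.
rewrite !mxE Hn; apply: eq_bigr => k _; rewrite !mxE.
by [].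
Qed.

Lemma basis_inv (V E : finType) (src tgt : E -> V) g g'
  (gam : 'I_g -> E -> int) (gam' : 'I_g' -> E -> int)
  (P : 'M[int]_(g', g)) (Q : 'M[int]_(g, g')) :
  is_H1_basis src tgt gam' ->
  (forall e, (\col_i gam' i e) = P *m (\col_k gam k e)) ->
  (forall e, (\col_k gam k e) = Q *m (\col_i gam' i e)) ->
  P *m Q = 1%:M.
Proof.
case=> _ ind _ HP HQ.
apply/eqP; rewrite -subr_eq0; apply/eqP; apply/matrixP => i l.
set D := P *m Q - 1%:M.
have H0 : forall e, D *m (\col_i gam' i e) = 0.
  by move=> e; rewrite /D mulmxBl mul1mx -mulmxA -HQ -HP subrr.
have := ind (fun l => D i l) => /(_ _) -> //; first by rewrite mxE.
move=> e; have := congr1 (fun M : 'M[int]_(g', 1) => M i 0) (H0 e).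
rewrite !mxE => H; rewrite -[RHS]H; by apply: eq_bigr => k _; congr (_ * _); rewrite mxE.
Qed.

Lemma dim_eq (g g' : nat) (P : 'M[int]_(g', g)) (Q : 'M[int]_(g, g')) :
  P *m Q = 1%:M -> (g' <= g)%N.
Proof.
move=> PQ.
have : map_mx (intr : int -> rat) (P *m Q) = 1%:M by rewrite PQ map_mx1.
rewrite map_mxM => PQr.
have := mxrankM_maxl (map_mx (intr : int -> rat) P) (map_mx (intr : int -> rat) Q).
rewrite PQr mxrank1 => /leq_trans; apply; exact: rank_leq_col.
Qed.

Lemma val1 (F : fieldType) (LF : nonarch_local_field F) : Defs.val LF 1 = 0.
Proof.
have := val_mul LF (oner_neq0 F) (oner_neq0 F); rewrite mulr1 => H.
by have := congr1 (fun z => z - Defs.val LF 1) H; rewrite subrr addrK.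
Qed.

Lemma valV (F : fieldType) (LF : nonarch_local_field F) (x : F) :
  x != 0 -> Defs.val LF x^-1 = - Defs.val LF x.
Proof.
move=> x0; have := val_mul LF x0 (invr_neq0 x0).
rewrite mulfV // val1 => H.
by apply: (addrI (Defs.val LF x)); rewrite -H subrr.
Qed.

Lemma valXn (F : fieldType) (LF : nonarch_local_field F) (x : F) (n : nat) :
  x != 0 -> Defs.val LF (x ^+ n) = Defs.val LF x *+ n.
Proof.
move=> x0; elim: n => [|n IH]; first by rewrite expr0 val1.
by rewrite exprS val_mul ?expf_neq0 // IH mulrS.
Qed.

Lemma valXz (F : fieldType) (LF : nonarch_local_field F) (x : F) (z : int) :
  x != 0 -> Defs.val LF (x ^ z) = Defs.val LF x * z.
Proof.
move=> x0; case: z => n.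
  by rewrite /exprz valXn // -mulr_natr natz.
rewrite /exprz valV ?expf_neq0 // valXn // NegzE mulrN -mulr_natr natz.
by [].
Qed.

Lemma val_prod (F : fieldType) (LF : nonarch_local_field F) (I : finType)
  (f : I -> F) : (forall i, f i != 0) ->
  Defs.val LF (\prod_i f i) = \sum_i Defs.val LF (f i).
Proof.
move=> f0.
apply: (big_ind2 (fun x v => x != 0 -> Defs.val LF x = v)).
- by rewrite val1.
- move=> x1 v1 x2 v2 H1 H2; rewrite mulf_eq0 negb_or => /andP [a b].
  by rewrite val_mul // H1 // H2.
- by [].
- by rewrite prodf_seq_neq0; apply/allP => i _; apply: f0.
Qed.

Arguments basis_change {V E src tgt g g' gam gam'}.
Arguments basis_inv {V E src tgt g g' gam gam' P Q}.
Arguments dim_eq {g g' P Q}.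

Theorem proposition4p2 (R : realType) (F : fieldType) (LF : nonarch_local_field F)
  (V E : finType) (src tgt : E -> V) (b : E -> F) (hb : in_B_flat LF b) :
  exists (V' E' : finType) (src' tgt' : E' -> V') (w : E' -> rat),
    (forall e, 0 < w e) /\
    forall (g : nat) (gam : 'I_g -> E -> int) (g' : nat) (gam' : 'I_g' -> E' -> int),
      is_H1_basis src tgt gam -> is_H1_basis src' tgt' gam' ->
      mp_iso (trop_fibre_mx R LF b gam) (jac_mx R w gam').
Proof.
pose w := fun e : E => ((Defs.val LF (b e))%:~R : rat).
exists V, E, src, tgt, w; split.
  move=> e; rewrite /w ltr0z; have [_ h] := hb e; exact: lt_le_trans h.
move=> g gam g' gam' B1 B2.
have [P HP] := basis_change B1 B2.
have [Q HQ] := basis_change B2 B1.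
have PQ := basis_inv B2 HP HQ.
have QP := basis_inv B1 HQ HP.
have h : g = g' by apply/eqP; rewrite eqn_leq (dim_eq PQ) (dim_eq QP).
subst g'.
have PQr : map_mx (intr : int -> R) P *m map_mx intr Q = 1%:M
  by rewrite -map_mxM PQ map_mx1.
have QPr : map_mx (intr : int -> R) Q *m map_mx intr P = 1%:M
  by rewrite -map_mxM QP map_mx1.
pose col (gm : 'I_g -> E -> int) e : 'cV[R]_g := \col_k (gm k e)%:~R.
have ce : forall gm e, col gm e = map_mx intr (\col_k gm k e).
  by move=> gm e; apply/matrixP => i j; rewrite !mxE.
have colP : forall e, col gam' e = map_mx intr P *m col gam e.
  by move=> e; rewrite !ce HP map_mxM.
have Jsum : forall gm, jac_mx R w gm = \sum_e ratr (w e) *: (col gm e *m (col gm e)^T).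
  move=> gm; apply/matrixP => i j; rewrite !mxE summxE; apply: eq_bigr => e _.
  by rewrite !mxE big_ord1 !mxE intrM.
set J := jac_mx R w gam.
have J' : jac_mx R w gam' = map_mx intr P *m J *m (map_mx intr P)^T.
  rewrite /J !Jsum mulmx_sumr mulmx_suml; apply: eq_bigr => e _.
  by rewrite colP trmx_mul -scalemxAr -scalemxAl !mulmxA.
have T : trop_fibre_mx R LF b gam = - J.
  apply/matrixP => i j; rewrite !mxE /logabs val_prod; last first.
    by move=> e; apply: expfz_neq0; exact: (hb e).1.
  rewrite rmorph_sum; congr (- _); apply: eq_bigr => e _.
  rewrite valXz; last exact: (hb e).1.
  by rewrite /w ratr_int /= intrM.
rewrite T J'.
exists erefl, (- (map_mx intr P)^T); split.
  rewrite -scaleN1r detZ det_tr det_map_mx normrM normrX normrN1 expr1n mul1r.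
  have : \det P * \det Q = 1 by rewrite -det_mulmx PQ det1.
  move/(congr1 (fun z : int => absz z)); rewrite abszM /= => /eqP.
  rewrite muln_eq1 => /andP [/eqP hP _].
  by rewrite -intr_norm -abszE hP.
move=> x; rewrite castmx_id; split.
  case=> n ->; exists (n *m Q).
  rewrite map_mxM !mulmxN mulNmx opprK !mulmxA.
  by rewrite -(mulmxA _ (map_mx _ Q)) QPr mulmx1.
case=> n H; exists (n *m P).
have xe : x = x *m (- (map_mx intr P)^T) *m (- (map_mx intr Q)^T).
  by rewrite !mulmxN mulNmx opprK -mulmxA -trmx_mul QPr trmx1 mulmx1.
rewrite {1}xe H map_mxM !mulmxN !mulmxA.
by rewrite -(mulmxA _ (map_mx _ P)^T) -trmx_mul QPr trmx1 mulmx1.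
Qed.
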